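(* In the setting of the context, suppose $\beta=\beta_0>1$. For $y\ge1$ let $\pi'(y)=\sum_{\tau:\ \lambda(\tau)\le y}\mathrm{tr}({}^t\Psi_\tau)$, the sum over periodic orbits $\tau$ of $\sigma$ with minimal period $\lambda(\tau)\le y$. Then for every $\gamma'>1$, $\frac{\pi'(y)}{\beta^{\gamma'y}}\to0$ as $y\to+\infty$.
   Context: $\Sigma=\{1,\dots,t\}^{\mathbb{N}}$, $\sigma$ the shift, $ix=(i,x_0,x_1,\dots)$. $\psi_1,\dots,\psi_t$ are affine bijections of $\mathbb{R}^d$ with $\max\mathrm{Lip}(\psi_i)<1$; $q\in\{1,\dots,d\}$; $(D\psi_i)_*$ is the pull-back on $q$-forms $\Lambda^q(\mathbb{R}^d)$ (inner product induced by the Euclidean one); $M^q$ = self-adjoint operators on $\Lambda^q$; $\Psi_i(A)={}^t(D\psi_i)_*A(D\psi_i)_*$, ${}^t\Psi_i(A)=(D\psi_i)_*A\,{}^t(D\psi_i)_*$. Assume $(ND_q)$: there is $\gamma>0$ such that for all $c,e\in\Lambda^q$ some $i$ has $|((D\psi_i)_*c,e)|\ge\gamma\|c\|\|e\|$. Then the operator $(\mathcal{L}_0A)(x)=\sum_{i=1}^t\Psi_i(A(ix))$ on $C(\Sigma,M^q)$ has a unique eigenvalue $\beta_0>0$ admitting an eigenfunction that is positive definite at every point. A periodic orbit $\tau$ is the set $\{x,\sigma(x),\dots,\sigma^{n-1}(x)\}$ of a point of minimal period $n=\lambda(\tau)$, and $\mathrm{tr}({}^t\Psi_\tau)=\mathrm{tr}({}^t\Psi_{x_0}\circ\dots\circ{}^t\Psi_{x_{n-1}})$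 for any $x\in\tau$ (independent of the choice). *)

(* Defs.v *)
From HB Require Import structures.
From mathcomp Require Import all_boot all_order all_algebra.
From mathcomp Require Import all_classical all_reals all_analysis.
Set Implicit Arguments. Unset Strict Implicit. Unset Printing Implicit Defensive.
Import Order.TTheory GRing.Theory Num.Theory.
Import numFieldTopology.Exports numFieldNormedType.Exports.
Local Open Scope classical_set_scope.
Local Open Scope ring_scope.

(** * Symbolic space Sigma = {1,...,t}^N (symbol i+1 is coded by i : 'I_t),
      with the product of discrete topologies. *)
Notation Sigma t := (prod_topology (fun _ : nat => discrete_topology 'I_t)).

Definition shift t (x : Sigma t) : Sigma t := fun n => x n.+1.

Definition scons t (i : 'I_t) (x : Sigma t) : Sigma t :=
  fun n => if n is m.+1 then x m else i.

Definition minper t (x : Sigma t) (n : nat) : Prop :=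
  (0 < n)%N /\ iter n (@shift t) x = x /\
  (forall k, (0 < k < n)%N -> iter k (@shift t) x <> x).

Definition orbit t (x : Sigma t) (n : nat) : set (Sigma t) :=
  [set iter k (@shift t) x | k in [set k | (k < n)%N]].

(** Lambda^q(R^d) is coordinatised in the orthonormal basis
      dx_S = dx_{s_1} /\ ... /\ dx_{s_q} (s_1 < ... < s_q), S a q-subset of 'I_d;
      the basis elements are enumerated through enum_val. *)
Definition qsub (d q : nat) := {S : {set 'I_d} | #|S| == q}.
Definition qdim (d q : nat) : nat := #|{: qsub d q}|.
Definition qidx (d q : nat) (i : 'I_(qdim d q)) : {set 'I_d} := val (enum_val i).

Definition sorted_elts d (S : {set 'I_d}) : seq nat :=
  sort leq [seq val i | i <- enum S].

(** entry of a d x d matrix indexed by naturals (0 outside) *)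
Definition entn (R : pzRingType) d (L : 'M[R]_d) (a b : nat) : R :=
  oapp (fun a' : 'I_d => oapp (fun b' : 'I_d => L a' b') 0 (insub b)) 0 (insub a).

Definition minor (R : comPzRingType) d q (L : 'M[R]_d) (S T : {set 'I_d}) : R :=
  \det (\matrix_(i < q, j < q)
          entn L (nth 0%N (sorted_elts S) i) (nth 0%N (sorted_elts T) j)).

(** matrix of the pull-back (L)_* on q-forms:
    (L^* w)(e_{t_1},...,e_{t_q}) = w(L e_{t_1},...,L e_{t_q}),
    i.e. (L^* w)_T = sum_S det L[S,T] w_S. *)
Definition pullq (R : comPzRingType) d q (L : 'M[R]_d) : 'M[R]_(qdim d q) :=
  \matrix_(T, S) minor q L (qidx S) (qidx T).

(** Psi_i(A) = ^t P A P  and  ^t Psi_i (A) = P A ^t P, for P = (D psi_i)_* *)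
Definition Psi (R : comPzRingType) n (P : 'M[R]_n) (A : 'M[R]_n) : 'M[R]_n :=
  P^T *m A *m P.
Definition tPsi (R : comPzRingType) n (P : 'M[R]_n) (A : 'M[R]_n) : 'M[R]_n :=
  P *m A *m P^T.

(** basis of the space M^q of self-adjoint (symmetric) operators *)
Definition symE (R : pzRingType) n (i j : 'I_n) : 'M[R]_n :=
  if i == j then delta_mx i i else delta_mx i j + delta_mx j i.

(** trace of a linear endomorphism Phi of the space of symmetric matrices,
    computed in the basis (symE i j)_{i <= j}: the coordinate of a symmetric
    B on symE i j (i <= j) is B i j. *)
Definition trSym (R : pzRingType) n (Phi : 'M[R]_n -> 'M[R]_n) : R :=
  \sum_(i < n) \sum_(j < n | (i <= j)%N) Phi (@symE R n i j) i j.

Definition tPsi_word (R : comPzRingType) t N (P : 'I_t -> 'M[R]_N)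
    (x : Sigma t) (n : nat) : 'M[R]_N -> 'M[R]_N :=
  foldr (fun k f => tPsi (P (x k)) \o f) id (iota 0 n).

(** tr(^t Psi_tau), computed at some (any) point of tau *)
Definition trOrb (R : realType) t N (P : 'I_t -> 'M[R]_N)
    (tau : set (Sigma t)) : R :=
  match pselect (exists xn : Sigma t * nat,
                   minper xn.1 xn.2 /\ tau = orbit xn.1 xn.2) with
  | left e => let xn := projT1 (cid e) in trSym (tPsi_word P xn.1 xn.2)
  | right _ => 0
  end.

Definition orbits_le (R : realType) t (y : R) : set (set (Sigma t)) :=
  [set tau | exists x n, minper x n /\ (n%:R <= y) /\ tau = orbit x n].

Definition piprime (R : realType) t N (P : 'I_t -> 'M[R]_N) (y : R) : R :=
  \sum_(tau \in @orbits_le R t y) trOrb P tau.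

Definition dotv (R : pzRingType) n (u v : 'cV[R]_n) : R := \sum_(k < n) u k 0 * v k 0.
Definition normv (R : realType) n (u : 'cV[R]_n) : R := Num.sqrt (dotv u u).

Definition L0 (R : comPzRingType) t N (P : 'I_t -> 'M[R]_N)
    (A : Sigma t -> 'M[R]_N) (x : Sigma t) : 'M[R]_N :=
  \sum_(i < t) Psi (P i) (A (scons i x)).

Definition posdef_eigenvalue (R : realType) t N (P : 'I_t -> 'M[R]_N) (beta : R)
  : Prop :=
  exists A : Sigma t -> 'M[R]_N,
    (forall i j, continuous (fun x : Sigma t => A x i j)) /\
    (forall x, (A x)^T = A x) /\
    (forall x (v : 'cV[R]_N), v != 0 -> 0 < dotv v (A x *m v)) /\
    (forall x, L0 P A x = beta *: A x).

(* Main.v *)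
Require Import Defs.
From HB Require Import structures.
From mathcomp Require Import all_boot all_order all_algebra.
From mathcomp Require Import all_classical all_reals all_analysis.
From mathcomp Require Import ring lra.
Import Order.TTheory GRing.Theory Num.Theory.
Import numFieldTopology.Exports numFieldNormedType.Exports.
Local Open Scope classical_set_scope.
Local Open Scope ring_scope.

Lemma Sigma_compact t : compact [set: Sigma t].
Proof.
have := @tychonoff nat (fun _ => discrete_topology 'I_t) (fun _ => setT) _.
rewrite (_ : [set f | _] = setT); last by apply/seteqP; split.
apply => i; apply: finite_compact; exact: finite_finset.
Qed.

Lemma dotvZ (R : comPzRingType) n (k : R) (u v : 'cV[R]_n) :
  dotv (k *: u) (k *: v) = k * k * dotv u v.
Proof.
rewrite /dotv mulr_sumr; apply: eq_bigr => i _; rewrite !mxE.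
by rewrite mulrCA !mulrA.
Qed.

Lemma dotv0 (R : comPzRingType) n (v : 'cV[R]_n) : dotv 0 v = 0.
Proof. by rewrite /dotv big1 // => i _; rewrite mxE mul0r. Qed.

Lemma sphere_compact (R : realType) n :
  compact [set u : 'rV[R]_n | `|u| = 1].
Proof.
apply: bounded_closed_compact.
  rewrite /= /bounded_near; near=> M => u /= ->.
  near: M; exact: nbhs_pinfty_ge.
apply: (@preimage_closed _ _ (fun u : 'rV[R]_n => `|u|) [set 1]).
  by move=> x _; apply: norm_continuous.
exact: closed_eq.
Unshelve. all: by end_near. Qed.

Lemma entry_le_norm (R : realType) m n (M : 'M[R]_(m, n)) i j :
  `|M i j| <= `|M|.
Proof.
change (`|M i j| <= mx_norm M); rewrite mx_normrE; apply/bigmax_geP; right => /=.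
by exists (i, j).
Qed.

Lemma contM (R : realType) (T : topologicalType) (s u : T -> R) :
  continuous s -> continuous u -> continuous (fun x => s x * u x).
Proof. by move=> hs hu x; exact: (continuousM (hs x) (hu x)). Qed.

Lemma posdef_lb (R : realType) t N (A : Sigma t -> 'M[R]_N) :
  (forall i j, continuous (fun x : Sigma t => A x i j)) ->
  (forall x (v : 'cV[R]_N), v != 0 -> 0 < dotv v (A x *m v)) ->
  exists2 c : R, 0 < c & forall x (v : 'cV[R]_N), c * dotv v v <= dotv v (A x *m v).
Proof.
case: t A => [|t] A hc hp.
  by exists 1 => // x; case: (x 0%N).
case: N A hc hp => [|N] A hc hp.
  by exists 1 => // x v; rewrite /dotv !big_ord0 mulr0.
pose f (p : Sigma t.+1 * 'rV[R]_N.+1) := dotv (p.2)^T (A p.1 *m (p.2)^T).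
pose K := [set: Sigma t.+1] `*` [set u : 'rV[R]_N.+1 | `|u| = 1].
have Kc : compact K by apply: compact_setX; [exact: Sigma_compact|exact: sphere_compact].
pose e : 'rV[R]_N.+1 := const_mx 1.
have e0 : e != 0.
  apply/eqP => /matrixP /(_ ord0 ord0); rewrite !mxE => /eqP; by rewrite oner_eq0.
have ne0 : `|e| != 0 by rewrite normr_eq0.
have K0 : K !=set0.
  exists ((fun _ => ord0), `|e|^-1 *: e); split => //=.
  by rewrite normrZ normrV ?unitfE // normr_id mulVf.
have fc : continuous f.
  have -> : f = fun p => \sum_(a < N.+1) \sum_(b < N.+1)
       (p.2 ord0 a * (A p.1 a b * p.2 ord0 b)).
    apply: funext => p; rewrite /f /dotv; apply: eq_bigr => a _.
    rewrite !mxE mulr_sumr; apply: eq_bigr => b _; by rewrite !mxE.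
  apply: continuous_big => [|a _]; first exact: add_continuous.
  apply: continuous_big => [|b _]; first exact: add_continuous.
  have c2 : forall c : 'I_N.+1,
      continuous (fun p : Sigma t.+1 * 'rV[R]_N.+1 => p.2 ord0 c).
    move=> c p; apply: (@continuous_comp _ _ _ snd (fun M : 'rV[R]_N.+1 => M ord0 c)).
      exact: cvg_snd.
    exact: coord_continuous.
  apply: contM; first exact: c2.
  apply: contM; last exact: c2.
  move=> p; apply: (@continuous_comp _ _ _ fst (fun x => A x a b)).
    exact: cvg_fst.
  exact: hc.
have [p0 p0K p0min] := compact_EVT_min K0 Kc (continuous_subspaceT fc).
have c0pos : 0 < f p0.
  move: p0K; rewrite inE => -[_ /= p0n]; apply: hp.
  apply/eqP => h; move: p0n; rewrite -[p0.2]trmxK h trmx0 normr0 => /eqP.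
  by rewrite eq_sym oner_eq0.
exists (f p0 / N.+1%:R); first by rewrite divr_gt0.
move=> x v.
have [->|v0] := eqVneq v 0.
  by rewrite !dotv0 mulr0.
set m := `|v^T|.
have m0 : 0 < m by rewrite normr_gt0 trmx_eq0.
have : f p0 <= f (x, m^-1 *: v^T).
  apply: p0min; rewrite inE; split => //=.
  by rewrite normrZ normrV ?unitfE ?gt_eqF // normr_id mulVf ?gt_eqF.
rewrite /f /= linearZ /= trmxK -scalemxAr dotvZ => h1.
have h2 : f p0 * (m * m) <= dotv v (A x *m v).
  by rewrite -ler_pdivlMr ?mulr_gt0 // mulrC invfM.
apply: le_trans h2.
rewrite -/(f p0) -mulrA ler_pM2l // ler_pdivrMl // /dotv.
apply: le_trans (_ : _ <= \sum_(i < N.+1) m * m) _; last first.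
  by rewrite sumr_const card_ord mulr_natl.
apply: ler_sum => i _; have := @entry_le_norm _ _ _ v^T ord0 i; rewrite mxE => h.
apply: le_trans (ler_norm _) _; rewrite normrM; exact: ler_pM.
Qed.

Set Implicit Arguments. Unset Strict Implicit.

Definition Ql (R : comPzRingType) t N (P : 'I_t -> 'M[R]_N) (s : seq 'I_t) : 'M[R]_N :=
  foldr (fun i M => P i *m M) 1%:M s.
Definition catw t (s : seq 'I_t) (x : Sigma t) : Sigma t := foldr (@scons t) x s.
Fixpoint allw t n : seq (seq 'I_t) :=
  if n is n'.+1 then [seq i :: w | w <- allw t n', i <- index_enum 'I_t]
  else [:: [::]].

Lemma Msum (R : comPzRingType) t N (P : 'I_t -> 'M[R]_N) (A : Sigma t -> 'M[R]_N)
  (beta : R) : (forall x, L0 P A x = beta *: A x) ->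
  forall n x, \sum_(s <- allw t n) (Ql P s)^T *m A (catw s x) *m Ql P s
              = beta ^+ n *: A x.
Proof.
move=> hL; elim=> [|n IH] x /=.
  by rewrite big_seq1 /Ql /= trmx1 mul1mx mulmx1 expr0 scale1r.
rewrite big_allpairs_dep /=.
under eq_bigr => w _.
  rewrite (eq_bigr (fun i => (Ql P w)^T *m ((P i)^T *m A (scons i (catw w x)) *m P i)
                   *m Ql P w)); last first.
    by move=> i _; rewrite /Ql /= trmx_mul !mulmxA.
  rewrite -mulmx_suml -mulmx_sumr.
  have -> : \sum_(i <- index_enum 'I_t) (P i)^T *m A (scons i (catw w x)) *m P i
            = beta *: A (catw w x) by rewrite -hL.
  rewrite -scalemxAr -scalemxAl.
  over.
by rewrite -scaler_sumr IH scalerA exprS.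
Qed.

Lemma mem_allw t (s : seq 'I_t) : s \in allw t (size s).
Proof.
elim: s => [|i s IH] /=; first by rewrite inE.
by apply/allpairsP; exists (s, i); rewrite IH mem_index_enum.
Qed.


Definition Fsq (R : pzRingType) N (Q : 'M[R]_N) : R := \sum_i \sum_j Q i j ^+ 2.

Lemma conj_delta (R : comPzRingType) N (Q : 'M[R]_N) a b i j :
  (Q *m delta_mx a b *m Q^T) i j = Q i a * Q j b.
Proof.
rewrite !mxE (bigD1 b) //= big1 ?addr0.
  rewrite !mxE (bigD1 a) //= big1 ?addr0; first by rewrite !mxE !eqxx mulr1.
  by move=> k /negbTE kb; rewrite !mxE kb /= mulr0.
move=> k /negbTE kb; rewrite !mxE big1 ?mul0r // => l _.
by rewrite !mxE kb andbF mulr0.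
Qed.

Lemma sq_le_Fsq (R : realDomainType) N (Q : 'M[R]_N) a b : Q a b ^+ 2 <= Fsq Q.
Proof.
rewrite /Fsq (bigD1 a) //= (bigD1 b) //= -addrA lerDl.
apply: addr_ge0; apply: sumr_ge0 => *; first exact: sqr_ge0.
by apply: sumr_ge0 => *; exact: sqr_ge0.
Qed.

Lemma prod_le_Fsq (R : realDomainType) N (Q : 'M[R]_N) a b c d :
  `|Q a b * Q c d| <= Fsq Q.
Proof.
have h1 := sq_le_Fsq Q a b; have h2 := sq_le_Fsq Q c d.
rewrite normrM.
have : 2 * (`|Q a b| * `|Q c d|) <= Q a b ^+ 2 + Q c d ^+ 2.
  rewrite -(real_normK (num_real (Q a b))) -(real_normK (num_real (Q c d))).
  have := sqr_ge0 (`|Q a b| - `|Q c d|); rewrite sqrrB; lra.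
lra.
Qed.

Lemma trSym_bound (R : realDomainType) N (Q : 'M[R]_N) :
  `|trSym (fun X => Q *m X *m Q^T)| <= (N * N * 2)%:R * Fsq Q.
Proof.
have F0 : 0 <= Fsq Q by rewrite sumr_ge0 // => *; rewrite sumr_ge0 // => *; exact: sqr_ge0.
rewrite /trSym; apply: le_trans (ler_norm_sum _ _ _) _.
apply: le_trans (_ : _ <= \sum_(i < N) \sum_(j < N) 2 * Fsq Q) _; last first.
  rewrite (eq_bigr (fun _ => (2 * Fsq Q) *+ N)); last by move=> *; rewrite sumr_const card_ord.
  rewrite sumr_const card_ord -mulrnA -mulr_natl !natrM.
  by rewrite [X in X <= _](_ : _ = (N%:R * N%:R * 2%:R) * Fsq Q) //; ring.
apply: ler_sum => i _; apply: le_trans (ler_norm_sum _ _ _) _.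
rewrite [leLHS]big_mkcond /=; apply: ler_sum => j _; case: ifP => _; last first.
  by rewrite mulr_ge0.
rewrite /symE; case: eqP => [<-|_].
  rewrite conj_delta; apply: le_trans (prod_le_Fsq _ _ _ _ _) _.
  by rewrite ler_peMl // ler1n.
rewrite mulmxDr mulmxDl mxE !conj_delta; apply: le_trans (ler_normD _ _) _.
by rewrite mulrDl mul1r lerD // prod_le_Fsq.
Qed.

Lemma tr_ge (R : realDomainType) N (Q A : 'M[R]_N) c :
  (forall v, c * dotv v v <= dotv v (A *m v)) -> c * Fsq Q <= \tr (Q^T *m A *m Q).
Proof.
move=> H; rewrite /Fsq exchange_big mulr_sumr /mxtrace; apply: ler_sum => k _.
have := H (col k Q).
have -> : dotv (col k Q) (col k Q) = \sum_i Q i k ^+ 2.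
  by apply: eq_bigr => i _; rewrite !mxE expr2.
move=> /le_trans; apply; rewrite -mulmxA mxE /dotv le_eqVlt; apply/orP; left; apply/eqP.
apply: eq_bigr => b _; rewrite !mxE; congr (_ * _); apply: eq_bigr => a _; by rewrite !mxE.
Qed.

Lemma sumF_bound (R : realFieldType) t N (P : 'I_t -> 'M[R]_N) (A : Sigma t -> 'M[R]_N)
  (beta c : R) : (forall x, L0 P A x = beta *: A x) -> 0 < c ->
  (forall x v, c * dotv v v <= dotv v (A x *m v)) ->
  forall n x, \sum_(s <- allw t n) Fsq (Ql P s) <= beta ^+ n * \tr (A x) / c.
Proof.
move=> hL c0 hc n x; rewrite ler_pdivlMr // mulrC mulr_sumr.
apply: le_trans (_ : _ <= \sum_(s <- allw t n) \tr ((Ql P s)^T *m A (catw s x) *m Ql P s)) _.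
  by apply: ler_sum => s _; apply: tr_ge.
by rewrite -raddf_sum /= (Msum hL) mxtraceZ.
Qed.


Lemma sum_uniq_sub (R : numDomainType) (T : eqType) (s1 s2 : seq T) (G : T -> R) :
  uniq s1 -> {subset s1 <= s2} -> (forall i, 0 <= G i) ->
  \sum_(i <- s1) G i <= \sum_(i <- s2) G i.
Proof.
elim: s1 s2 => [|a s1 IH] s2 /= u sub G0; first by rewrite big_nil sumr_ge0.
case/andP: u => as1 u.
have a2 : a \in s2 by apply: sub; rewrite inE eqxx.
rewrite (perm_big _ (perm_to_rem a2)) !big_cons lerD2l.
apply: IH => // b bs1; have := sub b; rewrite inE bs1 orbT => /(_ isT) b2.
apply: rem_mem => //; apply/eqP => ba; move: as1; by rewrite -ba bs1.
Qed.

Lemma fsbig_bound (R : realDomainType) (T : choiceType) (U : eqType) (A : set T)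
  (F : T -> R) (h : T -> U) (G : U -> R) (W : seq U) :
  (forall s, 0 <= G s) -> (forall x, A x -> `|F x| <= G (h x)) ->
  (forall x y, A x -> A y -> h x = h y -> x = y) -> (forall x, A x -> h x \in W) ->
  `|\sum_(x \in A) F x| <= \sum_(s <- W) G s.
Proof.
move=> G0 hF hinj hW.
set S := finite_support 0 A F.
have SA : forall x, x \in S -> A x.
  case: (pselect (finite_set (A `&` F @^-1` [set~ 0]))) => fin.
    by move=> x; rewrite /S in_finite_support // inE => -[].
  by rewrite /S no_finite_support.
apply: le_trans (ler_norm_sum _ _ _) _.
apply: le_trans (_ : _ <= \sum_(x <- S) G (h x)) _.
  by rewrite big_seq [X in _ <= X]big_seq; apply: ler_sum => x xS; exact: hF (SA x xS).
rewrite -(big_map h xpredT G); apply: sum_uniq_sub => //.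
  rewrite map_inj_in_uniq; first exact: finite_support_uniq.
  by move=> x y /SA xA /SA yA; exact: hinj.
by move=> s /mapP [x /SA xA ->]; exact: hW.
Qed.

Lemma iter_shift t k (x : Sigma t) m : iter k (@Defs.shift t) x m = x (k + m)%N.
Proof. by elim: k m => [|k IH] m //=; rewrite /Defs.shift IH addnS. Qed.

Lemma per_shift t n (x : Sigma t) : iter n (@Defs.shift t) x = x ->
  forall m, x m = x (m %% n)%N.
Proof.
move=> hp m.
have H : forall k r, x (k * n + r)%N = x r.
  elim=> [|k IH] r; first by rewrite mul0n add0n.
  by rewrite mulSn -addnA -iter_shift hp IH.
by rewrite {1}(divn_eq m n) H.
Qed.

Lemma minper_word t (x x' : Sigma t) n n' :
  minper x n -> minper x' n' -> map x (iota 0 n) = map x' (iota 0 n') ->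
  x = x' /\ n = n'.
Proof.
move=> [n0 [hx _]] [n'0 [hx' _]] hw.
have nn : n = n' by have := congr1 size hw; rewrite !size_map !size_iota.
subst n'; split => //; apply: funext => m.
rewrite (per_shift hx) (per_shift hx').
have hm : (m %% n < n)%N by rewrite ltn_mod.
have := congr1 (fun s => nth (x 0%N) s (m %% n)) hw => /=.
by rewrite !(nth_map 0%N) ?size_iota // nth_iota // add0n.
Qed.

Lemma tPsi_wordE (R : comPzRingType) t N (P : 'I_t -> 'M[R]_N) (x : Sigma t) n X :
  tPsi_word P x n X = Ql P (map x (iota 0 n)) *m X *m (Ql P (map x (iota 0 n)))^T.
Proof.
rewrite /tPsi_word; elim: (iota 0 n) X => [|k s IH] X /=.
  by rewrite /Ql /= mul1mx trmx1 mulmx1.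
by rewrite IH /tPsi /Ql /= trmx_mul !mulmxA.
Qed.


Definition wordOf t (tau : set (Sigma t)) : seq 'I_t :=
  match pselect (exists xn : Sigma t * nat,
                   minper xn.1 xn.2 /\ tau = Defs.orbit xn.1 xn.2) with
  | left e => let xn := projT1 (cid e) in map xn.1 (iota 0 xn.2)
  | right _ => [::]
  end.

Lemma Fsq_ge0 (R : realDomainType) N (Q : 'M[R]_N) : 0 <= Fsq Q.
Proof. by rewrite sumr_ge0 // => *; rewrite sumr_ge0 // => *; exact: sqr_ge0. Qed.

Lemma trOrb_bound (R : realType) t N (P : 'I_t -> 'M[R]_N) tau :
  `|trOrb P tau| <= (N * N * 2)%:R * Fsq (Ql P (wordOf tau)).
Proof.
rewrite /trOrb /wordOf; case: pselect => [e|_]; last by rewrite normr0 mulr_ge0 ?Fsq_ge0.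
case: (cid e) => [[x n] /= _].
rewrite (_ : tPsi_word P x n = fun X => Ql P (map x (iota 0 n)) *m X *m
                                     (Ql P (map x (iota 0 n)))^T).
  exact: trSym_bound.
by apply: funext => X; exact: tPsi_wordE.
Qed.

Lemma wordOf_spec (R : realType) t (y : R) (tau : set (Sigma t)) : orbits_le y tau ->
  exists x n, minper x n /\ tau = Defs.orbit x n /\
              wordOf tau = map x (iota 0 n) /\ n%:R <= y.
Proof.
case=> x [n [mp [ny ->]]].
rewrite /wordOf; case: pselect => [e|ne]; last by exfalso; apply: ne; exists (x, n).
case: (cid e) => [[x' n'] /= [mp' eo]].
exists x', n'; do !split => //.
apply: le_trans ny; rewrite ler_nat.
have : Defs.orbit x n x'.
  by rewrite eo; exists 0%N => //; case: mp'.
case=> k /= kn hk.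
have hp : iter n (@Defs.shift t) x' = x'.
  by rewrite -hk -iterD addnC iterD; case: mp => _ [-> _].
rewrite leqNgt; apply/negP => nn'; case: mp' => _ [_ hmin].
by apply: (hmin n) => //; rewrite nn' andbT; case: mp.
Qed.

Lemma wordOf_inj (R : realType) t (y : R) (tau1 tau2 : set (Sigma t)) :
  orbits_le y tau1 -> orbits_le y tau2 -> wordOf tau1 = wordOf tau2 -> tau1 = tau2.
Proof.
move=> /wordOf_spec [x1 [n1 [m1 [-> [-> _]]]]] /wordOf_spec [x2 [n2 [m2 [-> [-> _]]]]].
by move=> /(minper_word m1 m2) [-> ->].
Qed.

Lemma K_bound (R : realType) t N (P : 'I_t -> 'M[R]_N) beta :
  0 <= beta -> posdef_eigenvalue P beta ->
  exists K : R, 0 <= K /\ forall n, (0 < n)%N ->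
    \sum_(s <- allw t n) Fsq (Ql P s) <= K * beta ^+ n.
Proof.
move=> b0 [A [hc [_ [hp hL]]]].
have [c c0 hcA] := @posdef_lb _ _ _ _ hc hp.
case: t P A hc hp hL hcA => [|t] P A hc hp hL hcA.
  exists 0; split => // -[|n] // _; rewrite mul0r /= big_allpairs_dep big1 // => w _.
  by rewrite big_ord0.
exists (Num.max 0 (\tr (A (fun _ => ord0)) / c)); split; first by rewrite le_max lexx.
move=> n _; apply: le_trans (sumF_bound hL c0 hcA n (fun _ => ord0)) _.
rewrite -mulrA mulrC ler_wpM2r ?exprn_ge0 //.
by rewrite le_max lexx orbT.
Qed.

Lemma geom_bound (R : realFieldType) (b : R) Y : 1 < b ->
  \sum_(n <- iota 1 Y) b ^+ n <= b ^+ Y.+1 / (b - 1).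
Proof.
move=> b1; have b10 : 0 < b - 1 by rewrite subr_gt0.
elim: Y => [|Y IH].
  by rewrite big_nil divr_ge0 // ?exprn_ge0 // ?ltW // (lt_trans ltr01).
have -> : iota 1 Y.+1 = iota 1 Y ++ [:: Y.+1].
  by have := iotaD 1 Y 1; rewrite addn1 add1n.
rewrite big_cat /= big_seq1.
apply: le_trans (lerD IH (lexx _)) _.
rewrite le_eqVlt; apply/orP; left; apply/eqP.
rewrite [b ^+ Y.+2]exprS; field.
by rewrite gt_eqF.
Qed.


Lemma pi_bound (R : realType) t N (P : 'I_t -> 'M[R]_N) beta :
  1 < beta -> posdef_eigenvalue P beta ->
  exists C : R, 0 <= C /\ forall y, 0 <= y -> `|piprime P y| <= C * expR (y * ln beta).
Proof.
move=> b1 hb; have bpos : 0 < beta by apply: lt_trans b1.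
have b0 : 0 <= beta by apply: ltW.
have [K [K0 hK]] := K_bound b0 hb.
pose G := fun s => (N * N * 2)%:R * Fsq (Ql P s).
exists ((N * N * 2)%:R * K * (beta / (beta - 1))); split.
  by rewrite !mulr_ge0 // ?invr_ge0 ?subr_ge0 ?ltW.
move=> y y0; set Y := Num.trunc y.
apply: le_trans (@fsbig_bound _ _ _ (orbits_le y) (trOrb P) (@wordOf t) G
   (flatten [seq allw t n | n <- iota 1 Y]) _ _ _ _) _.
- by move=> s; rewrite mulr_ge0 // Fsq_ge0.
- by move=> tau _; exact: trOrb_bound.
- by move=> a b ha hb'; exact: wordOf_inj ha hb'.
- move=> tau /wordOf_spec [x [n [[n0 _] [_ [-> ny]]]]].
  apply/flattenP; exists (allw t n).
    by apply/mapP; exists n => //; rewrite mem_iota n0 add1n ltnS truncn_ge_nat.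
  by have := mem_allw (map x (iota 0 n)); rewrite size_map size_iota.
rewrite big_flatten /= big_map.
apply: le_trans (_ : _ <= \sum_(n <- iota 1 Y) ((N * N * 2)%:R * K) * beta ^+ n) _.
  rewrite big_seq [X in _ <= X]big_seq; apply: ler_sum => n; rewrite mem_iota => /andP [n1 _].
  rewrite /G -mulr_sumr -mulrA ler_wpM2l //; exact: hK.
rewrite -mulr_sumr -mulrA -[X in _ <= X]mulrA -[X in _ <= X]mulrA ler_wpM2l // ler_wpM2l //.
apply: le_trans (geom_bound Y b1) _.
rewrite exprS mulrAC; apply: ler_wpM2l.
  by rewrite divr_ge0 // subr_ge0 ltW.
rewrite -powR_mulrn // /powR gt_eqF //= ler_expR ler_wpM2r ?truncn_le //.
exact: ltW (ln_gt0 b1).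
Qed.

Unset Implicit Arguments.
Theorem lemma3p4 (R : realType) (t d q : nat)
  (L : 'I_t -> 'M[R]_d) (b : 'I_t -> 'cV[R]_d)
  (Linv : forall i, L i \in unitmx)
  (Hcontr : exists2 c : R, c < 1 & forall i (x y : 'cV[R]_d),
      normv ((L i *m x + b i) - (L i *m y + b i)) <= c * normv (x - y))
  (Hq : (1 <= q <= d)%N)
  (HND : exists2 g : R, 0 < g & forall c e : 'cV[R]_(qdim d q),
      exists i, g * normv c * normv e <= `| dotv (pullq q (L i) *m c) e |)
  (beta : R)
  (Hbeta : posdef_eigenvalue (fun i => pullq q (L i)) beta)
  (Hbeta1 : 1 < beta)
  (g' : R) (Hg' : 1 < g') :
  (fun y : R => piprime (fun i => pullq q (L i)) y / beta `^ (g' * y))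
    @ +oo --> 0.
Proof.
have [C [C0 hC]] := pi_bound Hbeta1 Hbeta.
have bpos : 0 < beta by apply: lt_trans Hbeta1.
set a := (g' - 1) * ln beta.
have a0 : 0 < a by rewrite mulr_gt0 ?subr_gt0 ?ln_gt0.
pose h y := C * expR (- (a * y)).
have hh : h y @[y --> +oo] --> 0.
  rewrite -(mulr0 C); apply: cvgM; first exact: cvg_cst.
  have h1 : (fun y : R => a * y) @ +oo --> +oo.
    apply/cvgryPge => A; apply: filterS (nbhs_pinfty_ge (num_real (A / a))).
    by move=> y; rewrite -ler_pdivrMl // mulrC.
  exact: (cvg_comp _ _ h1 (@cvgr_expR R)).
apply: (@squeeze_cvgr _ _ _ _ (fun y => - h y) h); last exact: hh; last first.
  by rewrite -oppr0; apply: cvgN.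
apply: filterS (nbhs_pinfty_ge (num_real (0 : R))) => y /= y0.
rewrite -ler_norml.
have pg : beta `^ (g' * y) = expR (g' * y * ln beta) by rewrite /powR gt_eqF.
rewrite normrM normfV pg (gtr0_norm (expR_gt0 _)) ler_pdivrMr ?expR_gt0 //.
apply: le_trans (hC y y0) _.
rewrite /h -[X in _ <= X]mulrA; apply: ler_wpM2l => //; rewrite -expRD ler_expR le_eqVlt; apply/orP; left; apply/eqP.
rewrite /a; ring.
Qed.
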